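(* Consider an instance of SPSC (defined in the context) and let $\{x_{ij}\},\{y_k\}$ be an optimal solution of the linear program (LP) defined in the context. Then the service placement $X^{\psi}$ output by algorithm SA2 (described in the context) has total reward at least $(1-e^{-1})R/4$, where $R$ is the maximum total reward of a feasible service placement.
   Context: An instance of the service placement with set constraints (SPSC) problem consists of finite sets $S$ (services), $V$ (nodes), $U$ (users); a size $s_i>0$ for each $i\in S$; a capacity $c_j>0$ for each $j\in V$; and for each user $k\in U$ a required service $i_k\in S$, a set $T_k\subseteq V$ and a reward $w_k>0$. A service placement is a family $X=\{X_i:i\in S\}$, $X_i\subseteq V$; it is feasible iff $\sum_{i}s_i\mathbf 1[j\in X_i]\le c_j$ for all $j$; its total reward is $\sum_kw_k\mathbf 1[T_k\cap X_{i_k}\ne\emptyset]$; $R$ is the maximum total reward over feasible placements. The LP has nonnegative real variables $x_{ij},y_k$: maximize $\sum_ky_kw_k$ s.t. $y_k\le\sum_{j\in T_k}x_{i_kj}$, $y_k\le1$ for all $k$; $\sum_ix_{ij}s_i\le c_j$ for all $j$; $x_{ij}=0$ if $s_i>c_j$; $0\le x_{ij}\le1$. Let $\beta:=1/4,\gamma:=1/2,\delta:=1/4$, $\mathbb N=\{1,2,\dots\}$. For $j\in V$: $P_j^\oplus:=\{i:c_j/2<s_i\le c_j\}$, $P_j^\ominus:=\{i:c_j/4<s_i\le c_j/2\}$, $P_j^q:=\{i:\gamma^qc_j\beta<s_i\le\gamma^{q-1}c_j\beta\}$ for $q\in\mathbb N$; $d_j^q:=\sum_{i\in P_j^q}x_{ij}$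 for $q\in\mathbb N\cup\{\oplus,\ominus\}$; $v_j:=\delta c_j/\sum_{i:s_i\le c_j\beta}s_ix_{ij}$; $n_j^q:=\lceil v_jd_j^q\rceil$ ($q\in\mathbb N$); $h_j:=d_j^\ominus$ if $d_j^\ominus<2$, else $h_j:=d_j^\ominus/2$. A construction map is $\zeta:V\to\{1,2,3\}$; its slot set $\Lambda(\zeta)$ (each slot $\sigma$ has a node $\nu(\sigma)$ and class $\kappa(\sigma)\in\mathbb N\cup\{\oplus,\ominus\}$) contains, for each $j$: one slot of class $\oplus$ if $\zeta(j)=1$; two slots of class $\ominus$ if $\zeta(j)=2$; for each $q\in\mathbb N$, $n_j^q$ slots of class $q$ if $\zeta(j)=3$; no other slots on $j$. A slot allocation of $\Lambda$ is $\tau:\Lambda\to S$ with $\tau(\sigma)\in P^{\kappa(\sigma)}_{\nu(\sigma)}$; $X^\tau_i:=\{j:\exists\sigma,\nu(\sigma)=j,\tau(\sigma)=i\}$; $f_\tau(k):=\mathbf 1[T_k\cap X^\tau_{i_k}\ne\emptyset]$. Random experiment: draw $\zeta$ with $\zeta(j)$ independent over $j$, equal to $1,2,3$ with probabilities $\delta d_j^\oplus$, $\delta h_j$, $1-\delta d_j^\oplus-\delta h_j$; then, given $\zeta$, each slot $\sigma\in\Lambda(\zeta)$ independently gets $\tau(\sigma)=i$ with probability $x_{i\nu(\sigma)}/d^{\kappa(\sigma)}_{\nu(\sigma)}$ for $i\in P^{\kappa(\sigma)}_{\nu(\sigma)}$. A partial construction map is $\zeta':V\to\{1,2,3,\emptyset\}$;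 $M(\zeta')$ is the set of construction maps agreeing with $\zeta'$ where $\zeta'\ne\emptyset$; $E'(\zeta'):=\mathbb E[\sum_kf_\tau(k)w_k\mid\zeta\in M(\zeta')]$. Algorithm SA2: (i) labelling: start with all nodes unlabelled; process nodes one at a time; for current node $j$ and $a\in\{1,2,3\}$ let $\zeta'_a$ be $\zeta'$ with $j$ labelled $a$, choose $a'$ maximizing $E'(\zeta'_a)$ and set $\zeta'(j):=a'$; let $\lambda$ be the final construction map and $\Lambda:=\Lambda(\lambda)$. (ii) slot filling: with partial slot allocations $\tau':\Lambda\to S\cup\{\emptyset\}$ ($\tau'(\sigma)\in P^{\kappa(\sigma)}_{\nu(\sigma)}\cup\{\emptyset\}$), $A(\tau')$ the slot allocations extending $\tau'$, and $E(\tau'):=\mathbb E[\sum_kf_\tau(k)w_k\mid\zeta=\lambda,\tau\in A(\tau')]$: start with all slots empty, process slots one at a time, assigning to the current slot $\sigma$ the $i\in P^{\kappa(\sigma)}_{\nu(\sigma)}$ maximizing $E$ of the resulting partial slot allocation; with $\psi$ the final slot allocation, output $X^\psi$. *)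

(* Defs.v *)
From HB Require Import structures.
From mathcomp Require Import all_boot all_order all_algebra.
From mathcomp Require Import reals sequences exp.
Set Implicit Arguments. Unset Strict Implicit. Unset Printing Implicit Defensive.
Import Order.TTheory GRing.Theory Num.Theory.
Local Open Scope ring_scope.

(* Slot classes: (+), (-), and q in N = {1,2,...} (CQ q, with q >= 1). *)
Inductive cls := CPlus | CMinus | CQ of nat.

(* A slot is (node, class, index); slots on a node of the same class are
   distinguished by their index. *)
Definition slot (V : Type) := (V * cls * nat)%type.
Definition snode {V} (sg : slot V) : V := sg.1.1.
Definition sclass {V} (sg : slot V) : cls := sg.1.2.

(* Labels 1,2,3 of a construction map are encoded as 0,1,2 : 'I_3. *)
Definition label := 'I_3.

Section SPSC.
Variables (R : realType) (S V U : finType).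
Variables (s : S -> R) (c : V -> R).
Variables (iu : U -> S) (T : U -> {set V}) (w : U -> R).

Definition placement := {ffun S -> {set V}}.

Definition feasible (X : placement) : bool :=
  [forall j : V, \sum_(i : S) s i * (j \in X i)%:R <= c j].

Definition reward (X : placement) : R :=
  \sum_(k : U) w k * (T k :&: X (iu k) != set0)%:R.

(* R = maximum total reward of a feasible placement (the empty placement is
   feasible with reward 0 and rewards are >= 0, so the initial value 0 of the
   max is harmless). *)
Definition Ropt : R := \big[Num.max/0]_(X : placement | feasible X) reward X.

Definition LP_feasible (x : S -> V -> R) (y : U -> R) : Prop :=
  (forall k, 0 <= y k) /\
  (forall k, y k <= \sum_(j in T k) x (iu k) j) /\
  (forall k, y k <= 1) /\
  (forall j, \sum_(i : S) x i j * s i <= c j) /\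
  (forall i j, c j < s i -> x i j = 0) /\
  (forall i j, 0 <= x i j <= 1).

Definition LP_obj (y : U -> R) : R := \sum_(k : U) y k * w k.

Definition LP_optimal (x : S -> V -> R) (y : U -> R) : Prop :=
  LP_feasible x y /\
  forall x' y', LP_feasible x' y' -> LP_obj y' <= LP_obj y.

Variable x : S -> V -> R.

Definition beta : R := 1 / 4.
Definition gamma : R := 1 / 2.
Definition delta : R := 1 / 4.

Definition inP (kp : cls) (j : V) (i : S) : bool :=
  match kp with
  | CPlus => (c j / 2 < s i) && (s i <= c j)
  | CMinus => (c j / 4 < s i) && (s i <= c j / 2)
  | CQ q => (0 < q)%N && (gamma ^+ q * c j * beta < s i)
                      && (s i <= gamma ^+ q.-1 * c j * beta)
  end.

Definition dd (kp : cls) (j : V) : R := \sum_(i | inP kp j i) x i j.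

(* v_j; if the denominator vanishes then (by the MathComp convention
   a / 0 = 0) v_j = 0, in which case every d_j^q (q in N) is 0 anyway. *)
Definition vv (j : V) : R :=
  delta * c j / \sum_(i | s i <= c j * beta) s i * x i j.

Definition nn (q : nat) (j : V) : nat := `|Num.ceil (vv j * dd (CQ q) j)|%N.

Definition hh (j : V) : R :=
  if dd CMinus j < 2 then dd CMinus j else dd CMinus j / 2.

(* Every class q with P_j^q nonempty satisfies q < qbound (for positive
   sizes: i \in P_j^q gives q - 1 < 2^(q-1) <= c_j/s_i).  Slots of classes
   q >= qbound are never created since then d_j^q = 0 and n_j^q = 0. *)
Definition qbound : nat :=
  (\max_(i : S) \max_(j : V) Num.truncn (c j / s i)).+2.

Definition node_slots (j : V) (a : label) : seq (slot V) :=
  match val a with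
  | 0%N => [:: (j, CPlus, 0%N)]
  | 1%N => [:: (j, CMinus, 0%N); (j, CMinus, 1%N)]
  | _ => flatten [seq [seq (j, CQ q, t) | t <- iota 0 (nn q j)]
                 | q <- iota 1 qbound]
  end.

Definition slots (z : {ffun V -> label}) : seq (slot V) :=
  flatten [seq node_slots j (z j) | j <- enum V].

Definition lab_prob (j : V) (a : label) : R :=
  match val a with
  | 0%N => delta * dd CPlus j
  | 1%N => delta * hh j
  | _ => 1 - delta * dd CPlus j - delta * hh j
  end.

Definition slot_prob (sg : slot V) (i : S) : R :=
  if inP (sclass sg) (snode sg) i then x i (snode sg) / dd (sclass sg) (snode sg)
  else 0.

Section Alloc.
Variable z : {ffun V -> label}.

Definition slot_at (t : 'I_(size (slots z))) : slot V := tnth (in_tuple (slots z)) t.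

Definition Xof (tau : {ffun 'I_(size (slots z)) -> S}) : placement :=
  [ffun i => [set j | [exists t, (snode (slot_at t) == j) && (tau t == i)]]].

(* E(tau') = E[ sum_k f_tau(k) w_k | zeta = z, tau extends tau' ]:
   slots fixed by tau' are fixed, the other slots are drawn independently
   with the distribution of the random experiment. *)
Definition Ecnd (tp : {ffun 'I_(size (slots z)) -> option S}) : R :=
  \sum_(tau : {ffun 'I_(size (slots z)) -> S})
     (\prod_(t : 'I_(size (slots z)))
        match tp t with
        | Some i0 => (tau t == i0)%:R
        | None => slot_prob (slot_at t) (tau t)
        end) * reward (Xof tau).
End Alloc.

(* E'(zeta') = E[ sum_k f_tau(k) w_k | zeta \in M(zeta') ]: labelled nodes
   are fixed, unlabelled nodes are drawn independently. *)
Definition Eprime (zp : {ffun V -> option label}) : R :=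
  \sum_(z : {ffun V -> label})
     (\prod_(j : V) match zp j with
                    | Some a => (z j == a)%:R
                    | None => lab_prob j (z j)
                    end) * Ecnd (z := z) [ffun => None].

(* (i) labelling, processing the nodes in the order [ord]; [lam] is a
   possible outcome (any tie-breaking) of the greedy choices. *)
Definition label_upd (lam : {ffun V -> label}) (pre : seq V) (j : V) (a : label)
  : {ffun V -> option label} :=
  [ffun j' => if j' == j then Some a
              else if j' \in pre then Some (lam j') else None].

Definition SA2_labelling (ord : seq V) (lam : {ffun V -> label}) : Prop :=
  perm_eq ord (enum V) /\
  forall pre j post, ord = pre ++ j :: post ->
    forall a : label, Eprime (label_upd lam pre j a) <= Eprime (label_upd lam pre j (lam j)).

(* (ii) slot filling of Lambda = Lambda(lam), processing the slots in the
   order [sord]; [psi] is a possible outcome of the greedy choices. *)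
Definition slot_upd (lam : {ffun V -> label})
  (psi : {ffun 'I_(size (slots lam)) -> S}) (pre : seq 'I_(size (slots lam)))
  (t : 'I_(size (slots lam))) (i : S) : {ffun 'I_(size (slots lam)) -> option S} :=
  [ffun t' => if t' == t then Some i
              else if t' \in pre then Some (psi t') else None].

Definition SA2_filling (lam : {ffun V -> label})
  (sord : seq 'I_(size (slots lam))) (psi : {ffun 'I_(size (slots lam)) -> S}) : Prop :=
  perm_eq sord (enum 'I_(size (slots lam))) /\
  forall pre t post, sord = pre ++ t :: post ->
    inP (sclass (slot_at t)) (snode (slot_at t)) (psi t) /\
    forall i, inP (sclass (slot_at t)) (snode (slot_at t)) i ->
      Ecnd (slot_upd psi pre t i) <= Ecnd (slot_upd psi pre t (psi t)).

End SPSC.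

(* Main.v *)
Require Import Defs.
From HB Require Import structures.
From mathcomp Require Import all_boot all_order all_algebra.
From mathcomp Require Import reals sequences exp.
From mathcomp Require Import ring lra.
Import Order.TTheory GRing.Theory Num.Theory.
Local Open Scope ring_scope.
Local Notation lt_le_trans := Order.PreorderTheory.lt_le_trans.

Section Num.
Variable R : realType.

Lemma expR_t2 {a : R} : 0 <= a -> 1 + a + a ^+ 2 / 2 <= expR a.
Proof.
move=> a0.
have H : series (exp_coeff a) 3 <= expR a.
  apply: nondecreasing_cvgn_le; last exact: is_cvg_series_exp_coeff.
  move=> n m nm; apply: (nondecreasing_series (u_ := exp_coeff a) (P := predT)) => //.
  move=> k _ _; rewrite /exp_coeff /= divr_ge0 // exprn_ge0 //.
apply: le_trans H.
rewrite /series /= !big_nat_recr //= big_nil /exp_coeff /=.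
rewrite expr0 expr1 !factS fact0 /=. 
rewrite add0r !divr1.
by rewrite mul1n muln1.
Qed.

Lemma expRm1_ge : 1/3 <= expR (-1) :> R.
Proof.
have -> : -1 = 6%:R * (- (1/6)) :> R by rewrite -mulrN; field.
rewrite expRM_natl.
have h : 5/6 <= expR (- (1/6)) :> R by apply: le_trans (expR_ge1Dx _); lra.
have h2 : (5/6) ^+ 6 <= expR (- (1/6)) ^+ 6 :> R.
  by rewrite lerXn2r // ?nnegrE ?expR_ge0 //; lra.
apply: le_trans h2; rewrite !exprS expr0; lra.
Qed.

Lemma final_num (yy : R) : 0 <= yy <= 1 ->
  yy * ((1 - expR (-1)) / 4) <= 1 - expR (- (3/16 * yy)).
Proof.
move=> /andP[y0 y1].
set t := 3/16 * yy.
have t0 : 0 <= t by rewrite /t; lra.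
have P0 : 0 < 1 + t + t ^+ 2 / 2 by have := sqr_ge0 t; lra.
have e1 : expR (- t) * (1 + t + t ^+ 2 / 2) <= 1.
  have := expR_t2 t0; have := expRxMexpNx_1 t; have := expR_ge0 (-t); nra.
have e2 : 1 <= (1 - yy / 6) * (1 + t + t ^+ 2 / 2) by rewrite /t; nra.
have e3 : 0 <= (1 - yy / 6 - expR (- t)) * (1 + t + t ^+ 2 / 2) by nra.
rewrite pmulr_lge0 // in e3.
have := expRm1_ge. nra.
Qed.

Lemma polyB (v xx : R) : 0 <= v -> 0 <= xx <= 1 ->
  xx * (v + v^+2/2) * (1 + v*xx + (v*xx)^+2/2) <= (v*xx + (v*xx)^+2/2) * (1 + v + v^+2/2).
Proof.
move=> v0 /andP[x0 x1].
rewrite -subr_ge0.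
have -> : (v*xx + (v*xx)^+2/2) * (1 + v + v^+2/2) - xx * (v + v^+2/2) * (1 + v*xx + (v*xx)^+2/2)
   = v * xx * ((v/2) * (1-xx) + (v^+2/2) * (1-xx^+2) + (v^+3/4) * xx * (1-xx)) by field.
have xx2 : xx^+2 <= 1 by nra.
apply: mulr_ge0; first nra.
have v2 := sqr_ge0 v; have v3 : 0 <= v^+3 by apply: exprn_ge0; lra.
have hh : 0 <= 1 - xx by lra.
have := mulr_ge0 (mulr_ge0 v3 x0) hh.
have : 0 <= v^+2/2 * (1 - xx^+2) by apply: mulr_ge0; lra.
have : 0 <= v/2 * (1 - xx) by apply: mulr_ge0; lra.
lra.
Qed.

Lemma polyA (L sg v : R) : 0 < v -> sg * v = 1/4 -> sg <= L -> 1/4 + sg/2 <= L ->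
  3/16 * (1 + v + v^+2/2) <= L * (v + v^+2/2).
Proof.
move=> v0 sv Ls Ls2.
have K0 : 0 <= v + v^+2/2 by have := sqr_ge0 v; lra.
have LK : sg * (v + v^+2/2) <= L * (v + v^+2/2) by apply: ler_wpM2r.
have LK2 : (1/4 + sg/2) * (v + v^+2/2) <= L * (v + v^+2/2) by apply: ler_wpM2r.
have sK : sg * (v + v^+2/2) = (1 + v/2)/4.
  have -> : v + v^+2/2 = v * (1 + v/2) by ring.
  by rewrite mulrA sv; ring.
have [vh|vh] := leP v (1/2).
  apply: le_trans LK; rewrite sK; nra.
apply: le_trans LK2.
have -> : (1/4 + sg/2) * (v + v^+2/2) = (v + v^+2/2)/4 + (sg * (v + v^+2/2))/2 by ring.
rewrite sK; nra.
Qed.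

Lemma small_num (L sg v xx E : R) : 0 < v -> sg * v = 1/4 -> sg <= L -> 1/4 + sg/2 <= L ->
  0 <= xx <= 1 -> 0 <= E -> E * (1 + v*xx + (v*xx)^+2/2) <= 1 -> 3/16 * xx <= L * (1 - E).
Proof.
move=> v0 sv Ls Ls2 /andP[x0 x1] E0 EP.
have hB : _ := @polyB v xx (ltW v0) (introT andP (conj x0 x1)).
have hA := @polyA L sg v v0 sv Ls Ls2.
have w0 : 0 <= v * xx by nra.
have Pw0 : 0 < 1 + v*xx + (v*xx)^+2/2 by have := sqr_ge0 (v*xx); lra.
have Pv0 : 0 < 1 + v + v^+2/2 by have := sqr_ge0 v; lra.
have K0 : 0 <= v + v^+2/2 by have := sqr_ge0 v; lra.
have s0 : 0 < sg by nra.
have L0 : 0 <= L by lra.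
have hC : v*xx + (v*xx)^+2/2 <= (1 - E) * (1 + v*xx + (v*xx)^+2/2) by nra.
rewrite -(@ler_pM2r _ ((1 + v + v^+2/2) * (1 + v*xx + (v*xx)^+2/2))); last exact: mulr_gt0.
apply: (@le_trans _ _ (xx * (L * (v + v^+2/2)) * (1 + v*xx + (v*xx)^+2/2))).
  have -> : 3 / 16 * xx * ((1 + v + v ^+ 2 / 2) * (1 + v * xx + (v * xx) ^+ 2 / 2)) = xx * (3/16 * (1 + v + v ^+ 2 / 2)) * (1 + v * xx + (v * xx) ^+ 2 / 2) by ring.
  by rewrite ler_wpM2r ?(ltW Pw0) // ler_wpM2l.
apply: (@le_trans _ _ (L * ((v*xx + (v*xx)^+2/2) * (1 + v + v^+2/2)))).
  have -> : xx * (L * (v + v ^+ 2 / 2)) * (1 + v * xx + (v * xx) ^+ 2 / 2) = L * (xx * (v + v^+2/2) * (1 + v*xx + (v*xx)^+2/2)) by ring.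
  by rewrite ler_wpM2l.
have -> : L * (1 - E) * ((1 + v + v ^+ 2 / 2) * (1 + v * xx + (v * xx) ^+ 2 / 2)) = L * (((1 - E) * (1 + v*xx + (v*xx)^+2/2)) * (1 + v + v^+2/2)) by ring.
rewrite ler_wpM2l // ler_wpM2r //; exact: ltW.
Qed.

Lemma minus_num (d xx : R) : 0 < d -> 0 <= xx -> xx <= 1 -> xx <= d ->
  3/16 * xx <= 1/4 * (if d < 2 then d else d / 2) * (1 - (1 - xx / d) ^+ 2).
Proof.
move=> d0 x0 x1 xd.
set r := xx / d.
have xr : xx = r * d by rewrite /r mulfVK // gt_eqF.
have r0 : 0 <= r by rewrite /r divr_ge0 // ltW.
have r1 : r <= 1 by rewrite /r ler_pdivrMr // mul1r.
rewrite xr; case: ifP => d2.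
  nra.
have d2' : 2 <= d by rewrite leNgt d2.
have rh : r <= 1/2 by rewrite /r ler_pdivrMr //; nra.
nra.
Qed.
End Num.

Section Gen.
Variables (R : realType) (I J : finType).
Implicit Types (tp : {ffun I -> option J}) (p : I -> J -> R) (E : {ffun I -> J} -> R) (g : {ffun I -> J}).

Definition Wt (tp : {ffun I -> option J}) (p : I -> J -> R) (i : I) (a : J) : R :=
  match tp i with Some a0 => (a == a0)%:R | None => p i a end.

Definition Gen (tp : {ffun I -> option J}) (p : I -> J -> R) (E : {ffun I -> J} -> R) : R :=
  \sum_(f : {ffun I -> J}) (\prod_i Wt tp p i (f i)) * E f.

Definition upd (tp : {ffun I -> option J}) i0 a : {ffun I -> option J} :=
  [ffun i => if i == i0 then Some a else tp i].

Lemma sum_ind_l {K : finType} (b : K) (F : K -> R) :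
  \sum_(a : K) F a * (b == a)%:R = F b.
Proof.
rewrite (bigD1 b) //= eqxx mulr1 big1 ?addr0 // => a ab.
by rewrite eq_sym (negbTE ab) mulr0.
Qed.

Lemma prod_ind {K : finType} (P : K -> bool) :
  \prod_(k : K) (P k)%:R = ([forall k, P k])%:R :> R.
Proof.
case: (boolP [forall k, P k]) => [/forallP H|/forallPn [k Hk]].
  by rewrite big1 // => k _; rewrite H.
by rewrite (bigD1 k) //= (negbTE Hk) mul0r.
Qed.

Lemma Gen_split tp p E (i0 : I) : tp i0 = None ->
  Gen tp p E = \sum_a p i0 a * Gen (upd tp i0 a) p E.
Proof.
move=> H0; rewrite /Gen.
under [RHS]eq_bigr do rewrite mulr_sumr.
rewrite exchange_big /=; apply: eq_bigr => f _.
rewrite (bigD1 i0) //= {1}/Wt H0.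
under [RHS]eq_bigr => a _.
  rewrite (bigD1 i0) //= {1}/Wt ffunE eqxx.
  rewrite (eq_bigr (fun i => Wt tp p i (f i))); last first.
    by move=> i /negbTE ni; rewrite /Wt ffunE ni.
  over.
rewrite /=.
under [RHS]eq_bigr => a _ do rewrite mulrA [p i0 a * _]mulrC -!mulrA.
rewrite -(sum_ind_l (f i0) (fun a => p i0 a * \prod_(i | i != i0) Wt tp p i (f i) * E f)).
by apply: eq_bigr => a _; rewrite eq_sym; ring.

Qed.

Lemma Gen_all p E (g : {ffun I -> J}) : Gen [ffun i => Some (g i)] p E = E g.
Proof.
rewrite /Gen (bigD1 g) //= [X in _ + X]big1 ?addr0; last first.
  move=> f fg.
have [i fi] : exists i, f i != g i.
  apply/existsP; apply: contraR fg => /existsPn H; apply/eqP/ffunP => i.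
  by have := H i; rewrite negbK => /eqP.
  by rewrite (bigD1 i) //= {1}/Wt ffunE (negbTE fi) !mul0r.
by rewrite big1 ?mul1r // => i _; rewrite /Wt ffunE eqxx.
Qed.

Lemma Gen_ge0 tp p E : (forall i a, 0 <= p i a) -> (forall f, 0 <= E f) -> 0 <= Gen tp p E.
Proof.
move=> p0 E0; apply: sumr_ge0 => f _; apply: mulr_ge0 => //.
apply: prodr_ge0 => i _; rewrite /Wt; case: (tp i) => // a; exact: ler0n.
Qed.

Definition pz (g : {ffun I -> J}) (pre : seq I) : {ffun I -> option J} :=
  [ffun i => if i \in pre then Some (g i) else None].

Definition lupd (g : {ffun I -> J}) (pre : seq I) i a : {ffun I -> option J} :=
  [ffun i' => if i' == i then Some a else if i' \in pre then Some (g i') else None].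

Lemma Gen_greedy p E (ord : seq I) (g : {ffun I -> J}) :
  (forall i a, 0 <= p i a) -> (forall i, \sum_a p i a <= 1) -> (forall f, 0 <= E f) ->
  perm_eq ord (enum I) ->
  (forall pre i post, ord = pre ++ i :: post -> forall a, p i a != 0 ->
      Gen (lupd g pre i a) p E <= Gen (lupd g pre i (g i)) p E) ->
  Gen [ffun => None] p E <= E g.
Proof.
move=> p0 ps1 E0 pord Hg.
have uord : uniq ord by rewrite (perm_uniq pord) enum_uniq.
suff H : forall post pre, ord = pre ++ post -> Gen (pz g pre) p E <= E g.
  have := H ord [::] erefl.
  by rewrite (_ : pz g [::] = [ffun => None]) //; apply/ffunP => i; rewrite !ffunE.
elim=> [|i post IH] pre Hord.
  rewrite cats0 in Hord; subst pre.
  rewrite (_ : pz g ord = [ffun i => Some (g i)]); first by rewrite Gen_all.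
  by apply/ffunP => i; rewrite !ffunE (perm_mem pord) mem_enum.
have nip : i \notin pre.
  move: uord; rewrite Hord cat_uniq => /and3P[_ H _]; apply: contra H => ip.
  by apply/hasP; exists i => //; rewrite inE eqxx.
rewrite (@Gen_split _ _ _ i); last by rewrite ffunE (negbTE nip).
have eq1 : forall a, upd (pz g pre) i a = lupd g pre i a.
  by move=> a; apply/ffunP => i'; rewrite !ffunE.
have eq2 : lupd g pre i (g i) = pz g (rcons pre i).
  apply/ffunP => i'; rewrite !ffunE mem_rcons inE.
  by case: eqP => [->|].
have Hle : Gen (lupd g pre i (g i)) p E <= E g.
  by rewrite eq2; apply: IH; rewrite cat_rcons.
apply: le_trans Hle.
apply: (@le_trans _ _ (\sum_a p i a * Gen (lupd g pre i (g i)) p E)).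
  apply: ler_sum => a _; rewrite eq1.
  case: (eqVneq (p i a) 0) => [->|pa]; first by rewrite !mul0r.
  by apply: ler_wpM2l => //; apply: Hg Hord a pa.
rewrite -mulr_suml.
have G0 := @Gen_ge0 (lupd g pre i (g i)) p E p0 E0.
by rewrite ler_piMl // ps1.
Qed.

End Gen.

Section Main.
Variables (R : realType) (S V U : finType) (s : S -> R) (c : V -> R) (iu : U -> S)
  (T : U -> {set V}) (w : U -> R) (x : S -> V -> R).
Hypothesis s_pos : forall i, 0 < s i.
Hypothesis c_pos : forall j, 0 < c j.
Hypothesis w_pos : forall k, 0 < w k.
Hypothesis x_ge0 : forall i j, 0 <= x i j.
Hypothesis x_le1 : forall i j, x i j <= 1.
Hypothesis x_cap : forall j, \sum_(i : S) x i j * s i <= c j.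
Hypothesis x_big : forall i j, c j < s i -> x i j = 0.

Notation DD := (dd s c x).
Notation inPP := (inP s c).
Notation Ec z tp := (@Ecnd R S V U s c iu T w x z tp).
Notation SAT z t := (@slot_at R S V s c x z t).
Notation XO z tau := (@Xof R S V s c x z tau).
Notation SP := (slot_prob s c x).
Notation LPb := (lab_prob s c x).

Lemma dd_ge0 kp j : 0 <= DD kp j.
Proof. by apply: sumr_ge0 => i _. Qed.

Lemma x_le_dd {kp j i} : inPP kp j i -> x i j <= DD kp j.
Proof.
move=> Hi; rewrite /dd (bigD1 i) //= lerDl; apply: sumr_ge0 => ? _; exact: x_ge0.
Qed.

Lemma slot_prob_ge0 sg i : 0 <= slot_prob s c x sg i.
Proof.
rewrite /slot_prob; case: ifP => // _; apply: divr_ge0 => //; exact: dd_ge0.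
Qed.

Lemma sum_slot_prob sg : \sum_i slot_prob s c x sg i = DD (sclass sg) (snode sg) / DD (sclass sg) (snode sg).
Proof.
rewrite /slot_prob -big_mkcond /= /dd mulr_suml //.
Qed.

Lemma ddV_le1 (d : R) : d / d <= 1.
Proof. by case: (eqVneq d 0) => [->|d0]; rewrite ?mul0r ?divff. Qed.

Lemma reward_ge0 X : 0 <= reward iu T w X.
Proof. apply: sumr_ge0 => k _; apply: mulr_ge0; [exact: ltW | exact: ler0n]. Qed.

Lemma Ecnd_ge0 (z : {ffun V -> label}) tp : 0 <= Ec z tp.
Proof.
apply: (@Gen_ge0 R _ _ tp (fun t => SP (SAT z t)) (fun tau => reward iu T w (XO z tau))).
  by move=> *; exact: slot_prob_ge0.
by move=> *; exact: reward_ge0.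
Qed.

Definition Dsm j := \sum_(i | s i <= c j * beta R) s i * x i j.

Lemma cap_split j : c j / 2 * DD CPlus j + c j / 4 * DD CMinus j + Dsm j <= c j.
Proof.
apply: le_trans (x_cap j).
rewrite /dd /Dsm !mulr_sumr big_mkcond [X in _ + X + _]big_mkcond [X in _ + X]big_mkcond /= -!big_split /=.
apply: ler_sum => i _.
have xi := x_ge0 i j; have si := s_pos i; have cj := c_pos j.
rewrite /beta.
case: ifP => [/andP[a1 a2]|_]; case: ifP => [/andP[b1 b2]|_]; case: ifP => [c1|_];
  rewrite ?addr0 ?add0r; try nra.
Qed.


Lemma Dsm_ge0 j : 0 <= Dsm j.
Proof. apply: sumr_ge0 => i _; apply: mulr_ge0; [exact: ltW | exact: x_ge0]. Qed.

Lemma dplus_le2 j : DD CPlus j <= 2.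
Proof.
have := cap_split j; have := Dsm_ge0 j; have := dd_ge0 CMinus j; have := dd_ge0 CPlus j.
have := c_pos j; nra.
Qed.

Lemma dminus_le4 j : DD CMinus j <= 4.
Proof.
have := cap_split j; have := Dsm_ge0 j; have := dd_ge0 CMinus j; have := dd_ge0 CPlus j.
have := c_pos j; nra.
Qed.

Lemma hh_bounds j : 0 <= hh s c x j <= 2.
Proof.
have := dminus_le4 j; have := dd_ge0 CMinus j.
rewrite /hh; case: ifP => h; lra.
Qed.

Lemma lab_ge0 j a : 0 <= LPb j a.
Proof.
have := hh_bounds j; have := dplus_le2 j; have := dd_ge0 CPlus j.
rewrite /lab_prob /delta; case: a => [[|[|m]] Hm] /=; lra.
Qed.

Lemma lab_sum j : \sum_a LPb j a = 1.
Proof. rewrite !big_ord_recr big_ord0 /= /lab_prob /=; ring. Qed.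

Lemma partA ord lam sord psi :
  SA2_labelling s c iu T w x ord lam -> @SA2_filling R S V U s c iu T w x lam sord psi ->
  Eprime s c iu T w x [ffun => None] <= reward iu T w (XO lam psi).
Proof.
move=> [pl Hl] [pf Hf].
apply: (@le_trans _ _ (Ec lam [ffun => None])).
  apply: (@Gen_greedy R V label LPb (fun z => Ec z [ffun => None]) ord lam).
  - exact: lab_ge0.
  - by move=> j; rewrite lab_sum.
  - by move=> z; exact: Ecnd_ge0.
  - exact: pl.
  - by move=> pre j post Hord a _; exact: Hl pre j post Hord a.
apply: (@Gen_greedy R _ S (fun t => SP (SAT lam t)) (fun tau => reward iu T w (XO lam tau)) sord psi).
- by move=> *; exact: slot_prob_ge0.
- by move=> t; rewrite sum_slot_prob ddV_le1.
- by move=> tau; exact: reward_ge0.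
- exact: pf.
move=> pre t post Hord a pa.
have ia : inPP (sclass (SAT lam t)) (snode (SAT lam t)) a.
  by move: pa; rewrite /slot_prob; case: ifP => //; rewrite eqxx.
by have [_ H] := Hf pre t post Hord; apply: H.
Qed.


Lemma partC (xo : S -> V -> R) (yo : U -> R) : LP_optimal s c iu T w xo yo ->
  Ropt s c iu T w <= LP_obj w yo.
Proof.
move=> [[y0 [ys [y1 _]]] Hopt].
have LP0 : 0 <= LP_obj w yo by apply: sumr_ge0 => k _; apply: mulr_ge0 => //; exact: ltW.
apply: bigmax_le => // X /forallP HX.
pose x' := fun i j => ((j \in X i)%:R : R).
pose y' := fun k => ((T k :&: X (iu k) != set0)%:R : R).
have -> : reward iu T w X = LP_obj w y'.
  by apply: eq_bigr => k _; rewrite mulrC.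
apply: (Hopt x' y').
have x'0 : forall i j, 0 <= x' i j by move=> i j; exact: ler0n.
split; first by move=> k; exact: ler0n.
split.
  move=> k; rewrite /y'; case: (set0Pn (T k :&: X (iu k))) => [[j]|_]; last first.
    by apply: sumr_ge0 => *; exact: x'0.
  rewrite inE => /andP[jT jX].
  rewrite (bigD1 j) //= /x' jX lerDl; apply: sumr_ge0 => *; exact: ler0n.
split; first by move=> k; rewrite /y'; case: (_ != _).
split.
  by move=> j; apply: le_trans (HX j); rewrite le_eqVlt; apply/orP; left; apply/eqP; apply: eq_bigr => i _; rewrite mulrC.
split.
  move=> i j cs; rewrite /x'; case: (boolP (j \in X i)) => //= jX.
  have : s i <= c j.
    apply: le_trans (HX j); rewrite (bigD1 i) //= jX mulr1 lerDl.
    by apply: sumr_ge0 => i' _; apply: mulr_ge0; [exact: ltW | exact: ler0n].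
  by rewrite leNgt cs.
move=> i j; rewrite /x'; case: (j \in X i) => /=; apply/andP; split; rewrite ?ler01 ?lexx //.
Qed.


Definition Mf (sg : slot V) : R := \sum_i SP sg i.
Definition Ff (k : U) (sg : slot V) : R :=
  \sum_i SP sg i * (~~ ((snode sg \in T k) && (i == iu k)))%:R.
Definition AA j := \sum_a LPb j a * \prod_(sg <- node_slots s c x j a) Mf sg.
Definition BB k j := \sum_a LPb j a * \prod_(sg <- node_slots s c x j a) Ff k sg.

Lemma cov_eq (z : {ffun V -> label}) tau k :
  (T k :&: XO z tau (iu k) != set0) = [exists t, (snode (SAT z t) \in T k) && (tau t == iu k)].
Proof.
apply/set0Pn/existsP.
  move=> [j]; rewrite inE => /andP[jT]; rewrite ffunE inE => /existsP[t /andP[/eqP tj ti]].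
  by exists t; rewrite tj jT.
move=> [t /andP[tT ti]]; exists (snode (SAT z t)); rewrite inE tT ffunE inE /=.
by apply/existsP; exists t; rewrite eqxx ti.
Qed.

Lemma Ec_none (z : {ffun V -> label}) : Ec z [ffun => None] =
  \sum_k w k * (\prod_t Mf (SAT z t) - \prod_t Ff k (SAT z t)).
Proof.
have -> : Ec z [ffun => None] = \sum_(tau : {ffun 'I_(size (slots s c x z)) -> S})
    \sum_k (\prod_t SP (SAT z t) (tau t)) * (w k * (T k :&: XO z tau (iu k) != set0)%:R).
  rewrite /Ecnd; apply: eq_bigr => tau _; rewrite /reward mulr_sumr; apply: eq_bigr => k _.
  by congr (_ * _); apply: eq_bigr => t _; rewrite ffunE.
rewrite exchange_big /=; apply: eq_bigr => k _.
rewrite /Mf /Ff !bigA_distr_bigA /= -sumrB mulr_sumr; apply: eq_bigr => tau _.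
have nb : forall b : bool, (b%:R : R) = 1 - (~~ b)%:R by case; rewrite /= ?subr0 ?subrr.
rewrite cov_eq nb negb_exists -prod_ind.
rewrite (_ : \prod_(t < size (slots s c x z)) (SP (SAT z t) (tau t) * (~~ ((snode (SAT z t) \in T k) && (tau t == iu k)))%:R) =
   (\prod_(t < size (slots s c x z)) SP (SAT z t) (tau t)) * \prod_(t < size (slots s c x z)) (~~ ((snode (SAT z t) \in T k) && (tau t == iu k)))%:R); last by rewrite big_split.
ring.
Qed.



Lemma prod_slots (z : {ffun V -> label}) (G : slot V -> R) :
  \prod_(t < size (slots s c x z)) G (SAT z t) = \prod_j \prod_(sg <- node_slots s c x j (z j)) G sg.
Proof.
rewrite /slot_at -(big_tnth _ _ _ xpredT) /slots big_flatten big_map /=.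
by rewrite enumT.
Qed.

Lemma E0_eq : Eprime s c iu T w x [ffun => None] = \sum_k w k * (\prod_j AA j - \prod_j BB k j).
Proof.
have -> : Eprime s c iu T w x [ffun => None] = \sum_(z : {ffun V -> label}) (\prod_j LPb j (z j)) * Ec z [ffun => None].
  by apply: eq_bigr => z _; congr (_ * _); apply: eq_bigr => j _; rewrite ffunE.
under [LHS]eq_bigr => z _ do rewrite Ec_none mulr_sumr.
rewrite exchange_big /=; apply: eq_bigr => k _.
rewrite /AA /BB !bigA_distr_bigA /= -sumrB mulr_sumr; apply: eq_bigr => z _.
rewrite !prod_slots.
rewrite !big_split /=; ring.
Qed.


Notation NN := (nn s c x).
Notation QB := (qbound s c).
Notation HH := (hh s c x).

Lemma node_sum j (G : slot V -> R) :
  \sum_a LPb j a * \prod_(sg <- node_slots s c x j a) G sg =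
  delta R * DD CPlus j * G (j, CPlus, 0%N)
  + delta R * HH j * (G (j, CMinus, 0%N) * G (j, CMinus, 1%N))
  + (1 - delta R * DD CPlus j - delta R * HH j) *
      \prod_(q <- iota 1 QB) \prod_(t <- iota 0 (NN q j)) G (j, CQ q, t).
Proof.
rewrite !big_ord_recr big_ord0 /lab_prob /node_slots [qbound s c]lock /= big_seq1 !big_cons big_nil mulr1 add0r -lock.
rewrite big_flatten big_map; congr (_ + _ * _); apply: eq_bigr => q _; by rewrite big_map.
Qed.

Lemma Mf_val sg : Mf sg = DD (sclass sg) (snode sg) / DD (sclass sg) (snode sg).
Proof. exact: sum_slot_prob. Qed.

Lemma Mf_val' j kp t : Mf (j, kp, t) = DD kp j / DD kp j.
Proof. exact: sum_slot_prob. Qed.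

Lemma Ff_ge0 k sg : 0 <= Ff k sg.
Proof. apply: sumr_ge0 => i _; apply: mulr_ge0; [exact: slot_prob_ge0 | exact: ler0n]. Qed.

Lemma MF_diff k sg : Mf sg - Ff k sg = (snode sg \in T k)%:R * SP sg (iu k).
Proof.
rewrite /Mf /Ff -sumrB.
rewrite (eq_bigr (fun i => SP sg i * ((snode sg \in T k) && (i == iu k))%:R)); last first.
  by move=> i _; case: (_ && _); rewrite /= ?mulr1 ?mulr0 ?subr0 ?subrr.
case: (snode sg \in T k) => /=; last by rewrite mul0r big1 // => i _; rewrite mulr0.
rewrite mul1r (bigD1 (iu k)) //= eqxx mulr1 big1 ?addr0 // => i /negbTE ->.
by rewrite mulr0.
Qed.

Lemma Mf_le1 sg : Mf sg <= 1.
Proof. by rewrite Mf_val ddV_le1. Qed.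

Lemma Ff_le_Mf k sg : Ff k sg <= Mf sg.
Proof.
rewrite -subr_ge0 MF_diff; apply: mulr_ge0; [exact: ler0n | exact: slot_prob_ge0].
Qed.

Lemma dd_dV (d : R) : d * (d / d) = d.
Proof. by case: (eqVneq d 0) => [->|d0]; rewrite ?mul0r ?divff ?mulr1. Qed.

Lemma nn_pos {q j} : (0 < NN q j)%N -> DD (CQ q) j != 0.
Proof.
by apply: contraTneq; rewrite /nn => ->; rewrite mulr0 ceil0.
Qed.

Lemma AA_eq1 j : AA j = 1.
Proof.
rewrite /AA node_sum !Mf_val' -(mulrA (delta R)) dd_dV -(mulrA (delta R) (HH j)).
rewrite big1_seq ?mulr1; last first.
  move=> q _; rewrite big1_seq // => t; rewrite mem_iota add0n => /andP[_ tn].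
  rewrite Mf_val' divff //; apply: nn_pos; exact: leq_ltn_trans tn.
have -> : HH j * (DD CMinus j / DD CMinus j * (DD CMinus j / DD CMinus j)) = HH j.
  rewrite /hh; case: (eqVneq (DD CMinus j) 0) => [->|d0]; first by rewrite ltr0n /= mul0r.
  by rewrite divff // mulr1 mulr1.
ring.
Qed.


Lemma gammaX n : gamma R ^+ n = (2 ^+ n)^-1.
Proof. by rewrite /gamma expr_div_n expr1n div1r. Qed.

Lemma two_pow_gt0 n : 0 < (2 : R) ^+ n.
Proof. by apply: exprn_gt0. Qed.

Lemma qlt {q j i} : inPP (CQ q) j i -> (q < QB)%N.
Proof.
rewrite /inP => /andP[/andP[q0 _] sle].
have si := s_pos i; have cj := c_pos j.
have qle : (q%:R : R) <= c j / s i.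
  rewrite ler_pdivlMr //.
  move: sle; rewrite gammaX /beta => sle.
  have e0 := two_pow_gt0 q.-1.
  have H1 : s i * 2 ^+ q.-1 * 4 <= c j.
    have E : (2 ^+ q.-1)^-1 * c j * (1 / 4) * (2 ^+ q.-1 * 4) = c j.
      by field; rewrite gt_eqF.
    rewrite -mulrA; rewrite -[X in _ <= X]E; apply: ler_wpM2r => //; apply: mulr_ge0; lra.
  have H2 : (q%:R : R) <= 2 ^+ q.-1 * 4.
    have : (q.-1 < 2 ^ q.-1)%N by apply: ltn_expl.
    rewrite -(ltr_nat R) natrX => H.
    have e1 : (1 : R) <= 2 ^+ q.-1 by apply: exprn_ege1; lra.
    rewrite -{1}(prednK q0) -addn1 natrD; lra.
  have : 0 <= s i * (2 ^+ q.-1 * 4 - q%:R) by apply: mulr_ge0; lra.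
  lra.
have qt : (q <= Num.truncn (c j / s i))%N.
  by rewrite truncn_ge_nat // divr_ge0 // ltW.
rewrite /qbound ltnS; apply: leqW; apply: (leq_trans qt).
apply: leq_trans (leq_bigmax i).
exact: (leq_bigmax (F := fun j0 => Num.truncn (c j0 / s i)) j).
Qed.

Lemma class_cases i j : x i j = 0 \/ inPP CPlus j i \/ inPP CMinus j i \/
  exists q, [/\ (q < QB)%N, inPP (CQ q) j i & s i <= c j * beta R].
Proof.
have si := s_pos i; have cj := c_pos j.
case: (ltrP (c j) (s i)) => [cs|sc]; first by left; exact: x_big.
case: (ltrP (c j / 2) (s i)) => [h1|h1]; first by right; left; rewrite /inP h1 sc.
case: (ltrP (c j / 4) (s i)) => [h2|h2]; first by right; right; left; rewrite /inP h2 h1.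
right; right; right.
have sb : s i <= c j * beta R by rewrite /beta; lra.
pose P n := gamma R ^+ n * c j * beta R < s i.
have exP : exists n, P n.
  exists (Num.truncn (c j * beta R / s i)).+1.
  set a := c j * beta R / s i.
  have a1 : a < (Num.truncn a).+1%:R by rewrite -truncn_le_nat.
  have a2 : ((Num.truncn a).+1%:R : R) < 2 ^+ (Num.truncn a).+1.
    by rewrite -natrX ltr_nat ltn_expl.
  rewrite /P gammaX mulrAC -mulrA mulrC ltr_pdivrMr ?two_pow_gt0 //.
  move: (lt_trans a1 a2); rewrite /a ltr_pdivrMr //; nra.
case: (ex_minnP exP) => q Pq qmin.
have q0 : (0 < q)%N.
  by move: Pq; case: q {qmin} => //; rewrite /P expr0 mul1r ltNge sb.
have nP : ~~ P q.-1.
  apply/negP => H; have := qmin _ H.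
  by case: q q0 {Pq qmin H} => // n _; rewrite /= ltnn.
have iq : inPP (CQ q) j i by rewrite /inP q0 /=; apply/andP; split; [exact: Pq | rewrite leNgt; exact: nP].
exists q; split => //; exact: qlt iq.
Qed.


Lemma dx_eq (d xx : R) : 0 <= xx -> xx <= d -> d * (xx / d) = xx.
Proof.
move=> x0 xd; case: (eqVneq d 0) => [d0|d0]; last by rewrite mulrC mulfVK.
subst d; have -> : xx = 0 by apply/eqP; rewrite eq_le xd x0.
by rewrite mul0r.
Qed.

Lemma Ff_val {k j kp} t : j \in T k -> inPP kp j (iu k) -> DD kp j != 0 ->
  Ff k (j, kp, t) = 1 - x (iu k) j / DD kp j.
Proof.
move=> jT ip d0.
have H := MF_diff k (j, kp, t).
rewrite Mf_val' divff // /snode /= jT mul1r /slot_prob /sclass /snode /= ip in H.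
by rewrite -H opprB addrC subrK.
Qed.

Lemma PM2_eq1 j : \prod_(q <- iota 1 QB) \prod_(t <- iota 0 (NN q j)) Mf (j, CQ q, t) = 1.
Proof.
rewrite big1_seq // => q _; rewrite big1_seq // => t; rewrite mem_iota add0n => /andP[_ tn].
rewrite Mf_val' divff //; apply: nn_pos; exact: leq_ltn_trans tn.
Qed.

Lemma prod_iota0 (a : R) n : \prod_(t <- iota 0 n) a = a ^+ n.
Proof.
have -> : iota 0 n = index_iota 0 n by rewrite /index_iota subn0.
by rewrite prodr_const_nat subn0.
Qed.

Lemma PF2_le {k j q} : j \in T k -> inPP (CQ q) j (iu k) -> (0 < NN q j)%N ->
  \prod_(q' <- iota 1 QB) \prod_(t <- iota 0 (NN q' j)) Ff k (j, CQ q', t)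
  <= (1 - x (iu k) j / DD (CQ q) j) ^+ NN q j.
Proof.
move=> jT iq n0.
have qQ := qlt iq.
have q0 : (0 < q)%N by move: iq; rewrite /inP => /andP[/andP[]].
have qin : q \in iota 1 QB by rewrite mem_iota q0 /= add1n ltnS ltnW.
rewrite (bigD1_seq q qin (iota_uniq 1 QB)) /=.
  rewrite (eq_big_seq (fun _ => 1 - x (iu k) j / DD (CQ q) j)); last first.
    by move=> t _; apply: Ff_val => //; exact: nn_pos.
  rewrite prod_iota0; apply: ler_piMr.
    rewrite -(Ff_val 0 jT iq (nn_pos n0)); apply: exprn_ge0; exact: Ff_ge0.
  apply: prodr_ile1 => q' _; apply/andP; split.
    by apply: prodr_ge0 => t _; exact: Ff_ge0.
  apply: prodr_ile1 => t _; rewrite Ff_ge0 /=; apply: le_trans (Mf_le1 _); exact: Ff_le_Mf.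
Qed.

Lemma vv_ge0 j : 0 <= vv s c x j.
Proof.
rewrite /vv /delta; apply: divr_ge0; last exact: Dsm_ge0.
apply: mulr_ge0; [lra | exact: ltW].
Qed.

Lemma nn_ge q j : vv s c x j * DD (CQ q) j <= (NN q j)%:R.
Proof.
have h0 : 0 <= vv s c x j * DD (CQ q) j by apply: mulr_ge0; [exact: vv_ge0 | exact: dd_ge0].
rewrite /nn natr_absz ger0_norm; first exact: ceil_ge.
by rewrite ceil_ge0; lra.
Qed.


Lemma expRN_P (t : R) : 0 <= t -> expR (- t) * (1 + t + t ^+ 2 / 2) <= 1.
Proof.
move=> t0; have := @expR_t2 R t t0; have := expRxMexpNx_1 t; have := expR_ge0 (- t); nra.
Qed.

Lemma capn j : DD CPlus j / 2 + DD CMinus j / 4 + Dsm j / c j <= 1.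
Proof.
have cj := c_pos j; have H := cap_split j.
have E : DD CPlus j / 2 + DD CMinus j / 4 + Dsm j / c j =
   (c j / 2 * DD CPlus j + c j / 4 * DD CMinus j + Dsm j) / c j by field; rewrite gt_eqF.
by rewrite E ler_pdivrMr // mul1r.
Qed.

Lemma Lval j : lab_prob s c x j ord_max = 1 - delta R * DD CPlus j - delta R * HH j.
Proof. by []. Qed.

Lemma small_gain k j q : j \in T k -> inPP (CQ q) j (iu k) -> s (iu k) <= c j * beta R ->
  3/16 * x (iu k) j <= (1 - delta R * DD CPlus j - delta R * HH j) *
     (1 - \prod_(q' <- iota 1 QB) \prod_(t <- iota 0 (NN q' j)) Ff k (j, CQ q', t)).
Proof.
move=> jT iq sb.
have L0 : 0 <= 1 - delta R * DD CPlus j - delta R * HH j by rewrite -Lval; exact: lab_ge0.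
have PF1 : \prod_(q' <- iota 1 QB) \prod_(t <- iota 0 (NN q' j)) Ff k (j, CQ q', t) <= 1.
  apply: prodr_ile1 => q' _; apply/andP; split.
    by apply: prodr_ge0 => t _; exact: Ff_ge0.
  apply: prodr_ile1 => t _; rewrite Ff_ge0 /=; apply: le_trans (Mf_le1 _); exact: Ff_le_Mf.
have x0 := x_ge0 (iu k) j; have x1 := x_le1 (iu k) j.
case: (eqVneq (x (iu k) j) 0) => [->|xn0].
  by rewrite mulr0; apply: mulr_ge0 => //; lra.
have xp : 0 < x (iu k) j by rewrite lt0r xn0.
have cj := c_pos j.
have Dp : 0 < Dsm j.
  apply: lt_le_trans (_ : s (iu k) * x (iu k) j <= Dsm j).
    by apply: mulr_gt0.
  rewrite /Dsm (bigD1 (iu k)) //= lerDl; apply: sumr_ge0 => i _; apply: mulr_ge0; [exact: ltW | exact: x_ge0].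
have vp : 0 < vv s c x j by rewrite /vv /delta; apply: divr_gt0 => //; apply: mulr_gt0 => //; lra.
have xd := x_le_dd iq.
have dp : 0 < DD (CQ q) j by exact: lt_le_trans xp xd.
have nge := nn_ge q j.
have np : (0 < NN q j)%N by rewrite -(ltr_nat R); apply: lt_le_trans nge; apply: mulr_gt0.
have PF2 := PF2_le jT iq np.
set r := x (iu k) j / DD (CQ q) j in PF2 *.
have r0 : 0 <= r by rewrite /r divr_ge0 // ltW.
have r1 : r <= 1 by rewrite /r ler_pdivrMr // mul1r.
apply: le_trans (_ : (1 - delta R * DD CPlus j - delta R * HH j) * (1 - (1 - r) ^+ NN q j) <= _); last first.
  by apply: ler_wpM2l => //; lra.
apply: (@small_num _ _ (Dsm j / c j) (vv s c x j)) => //.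
- rewrite (_ : vv s c x j = delta R * c j / Dsm j) // /delta; field; rewrite !gt_eqF //.
- have := capn j; rewrite /hh /delta; have := dd_ge0 CPlus j; have := dd_ge0 CMinus j.
  case: ifP => _; lra.
- have := capn j; rewrite /hh /delta; have := dd_ge0 CPlus j; have := dd_ge0 CMinus j.
  case: ifP => h; lra.
- by apply/andP.
- by apply: exprn_ge0; lra.
set v := vv s c x j; set xx := x (iu k) j.
have E1 : (1 - r) ^+ NN q j <= expR (- (v * xx)).
  apply: (@le_trans _ _ (expR (- r) ^+ NN q j)).
    apply: lerXn2r; rewrite ?nnegrE ?expR_ge0 //; first lra.
    by have := expR_ge1Dx (- r); lra.
  rewrite -expRM_natl ler_expR.
  have : v * xx <= (NN q j)%:R * r.
    rewrite /r mulrA ler_pdivlMr // -mulrA [xx * _]mulrC mulrA; apply: ler_wpM2r => //.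
  lra.
have E2 : expR (- (v * xx)) * (1 + v * xx + (v * xx) ^+ 2 / 2) <= 1.
  apply: expRN_P; apply: mulr_ge0; [exact: (ltW vp) | exact: x0].
have P0 : 0 <= 1 + v * xx + (v * xx) ^+ 2 / 2.
  have vx0 : 0 <= v * xx by apply: mulr_ge0; [exact: (ltW vp) | exact: x0].
  have := sqr_ge0 (v * xx); lra.
apply: le_trans E2; apply: ler_wpM2r => //.
Qed.


Lemma coef_ge0 j : [/\ 0 <= delta R * DD CPlus j, 0 <= delta R * HH j &
   0 <= 1 - delta R * DD CPlus j - delta R * HH j].
Proof.
split; last by rewrite -Lval; exact: lab_ge0.
  by apply: mulr_ge0; [rewrite /delta; lra | exact: dd_ge0].
by have := hh_bounds j; rewrite /delta; lra.
Qed.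

Lemma BB_ge0 k j : 0 <= BB k j.
Proof.
rewrite /BB; apply: sumr_ge0 => a _; apply: mulr_ge0; first exact: lab_ge0.
by apply: prodr_ge0 => sg _; exact: Ff_ge0.
Qed.

Lemma BB_bound k j : BB k j <= 1 - 3/16 * x (iu k) j * (j \in T k)%:R.
Proof.
have A := AA_eq1 j; rewrite /AA node_sum in A; rewrite /BB node_sum.
have [a0 a1 a2] := coef_ge0 j.
set PM := \prod_(q <- iota 1 QB) _ in A.
set PF := \prod_(q <- iota 1 QB) _.
have FM : forall sg, Ff k sg <= Mf sg by move=> sg; exact: Ff_le_Mf.
have F0 : forall sg, 0 <= Ff k sg by move=> sg; exact: Ff_ge0.
have PFM : PF <= PM.
  apply: ler_prod => q _; apply/andP; split; first by apply: prodr_ge0 => *.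
  by apply: ler_prod => t _; rewrite F0 FM.
have FFM : Ff k (j, CMinus, 0%N) * Ff k (j, CMinus, 1%N) <= Mf (j, CMinus, 0%N) * Mf (j, CMinus, 1%N).
  by apply: ler_pM.
set a0' := delta R * DD CPlus j in a0 A *.
set a1' := delta R * HH j in a1 A *.
set a2' := 1 - a0' - a1' in a2 A *.
have g0 : 0 <= a0' * (Mf (j, CPlus, 0%N) - Ff k (j, CPlus, 0%N)) by apply: mulr_ge0 => //; rewrite subr_ge0.
have g1 : 0 <= a1' * (Mf (j, CMinus, 0%N) * Mf (j, CMinus, 1%N) - Ff k (j, CMinus, 0%N) * Ff k (j, CMinus, 1%N)).
  by apply: mulr_ge0 => //; rewrite subr_ge0.
have g2 : 0 <= a2' * (PM - PF) by apply: mulr_ge0 => //; rewrite subr_ge0.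
suff gain : 3/16 * x (iu k) j * (j \in T k)%:R <=
   a0' * (Mf (j, CPlus, 0%N) - Ff k (j, CPlus, 0%N)) +
   a1' * (Mf (j, CMinus, 0%N) * Mf (j, CMinus, 1%N) - Ff k (j, CMinus, 0%N) * Ff k (j, CMinus, 1%N)) +
   a2' * (PM - PF).
  move: gain; rewrite !mulrBr => gain; nra.
case jT : (j \in T k); last by rewrite mulr0; lra.
rewrite mulr1.
have x0 := x_ge0 (iu k) j; have x1 := x_le1 (iu k) j.
case: (class_cases (iu k) j) => [->|[ip|[im|[q [qQ iq sb]]]]]; first by rewrite mulr0; lra.
- suff : 3/16 * x (iu k) j <= a0' * (Mf (j, CPlus, 0%N) - Ff k (j, CPlus, 0%N)) by lra.
  rewrite MF_diff /snode /= jT mul1r /slot_prob /sclass /snode /= ifT; last exact: ip.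
  rewrite /a0' -[delta R * _ * _]mulrA dx_eq //; last exact: x_le_dd.
  rewrite /delta; lra.
- suff : 3/16 * x (iu k) j <= a1' * (Mf (j, CMinus, 0%N) * Mf (j, CMinus, 1%N) - Ff k (j, CMinus, 0%N) * Ff k (j, CMinus, 1%N)) by lra.
  have xd := x_le_dd im.
  case: (eqVneq (DD CMinus j) 0) => [d0|d0].
    have -> : x (iu k) j = 0 by apply/eqP; rewrite eq_le x0 -d0 xd.
    by rewrite mulr0.
  rewrite !Mf_val' divff // mulr1 !(Ff_val _ jT im d0) -expr2 /a1' /hh /delta.
  apply: minus_num => //; rewrite lt0r d0; exact: dd_ge0.
- suff : 3/16 * x (iu k) j <= a2' * (PM - PF) by lra.
  rewrite /PM PM2_eq1 /a2' /a0' /a1' /PF.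
  exact: (@small_gain k j q jT iq sb).
Qed.


Lemma partB (y : U -> R) : (forall k, 0 <= y k) -> (forall k, y k <= 1) ->
  (forall k, y k <= \sum_(j in T k) x (iu k) j) ->
  (1 - expR (-1)) / 4 * LP_obj w y <= Eprime s c iu T w x [ffun => None].
Proof.
move=> y0 y1 ys.
rewrite E0_eq /LP_obj mulr_sumr; apply: ler_sum => k _.
rewrite big1; last by move=> j _; exact: AA_eq1.
have PB : \prod_j BB k j <= expR (- (3/16 * y k)).
  apply: (@le_trans _ _ (\prod_j (1 - 3/16 * x (iu k) j * (j \in T k)%:R))).
    by apply: ler_prod => j _; rewrite BB_ge0 BB_bound.
  apply: (@le_trans _ _ (\prod_j expR (- (3/16 * x (iu k) j * (j \in T k)%:R)))).
    apply: ler_prod => j _; apply/andP; split.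
      have := x_le1 (iu k) j; have := x_ge0 (iu k) j; case: (j \in T k) => /=; lra.
    by have := expR_ge1Dx (- (3/16 * x (iu k) j * (j \in T k)%:R)); lra.
  rewrite -expR_sum ler_expR sumrN lerN2.
  rewrite (eq_bigr (fun j => 3/16 * (if j \in T k then x (iu k) j else 0))); last first.
    by move=> j _; case: (j \in T k); rewrite /= ?mulr1 ?mulr0.
  rewrite -mulr_sumr -big_mkcond /=; apply: ler_wpM2l; [lra | exact: ys].
have F := @final_num R (y k).
have Fy : y k * ((1 - expR (-1)) / 4) <= 1 - expR (- (3 / 16 * y k)) by apply: F; rewrite y0 y1.
have wk := w_pos k.
have : w k * (y k * ((1 - expR (-1)) / 4)) <= w k * (1 - \prod_j BB k j).
  apply: ler_wpM2l; [exact: ltW | lra].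
move=> H; apply: le_trans H; rewrite le_eqVlt; apply/orP; left; apply/eqP; ring.
Qed.


Lemma main_ineq (y : U -> R) ord lam sord psi :
  LP_optimal s c iu T w x y -> SA2_labelling s c iu T w x ord lam ->
  @SA2_filling R S V U s c iu T w x lam sord psi ->
  (1 - expR (-1)) * Ropt s c iu T w / 4 <= reward iu T w (XO lam psi).
Proof.
move=> Hopt Hl Hf.
have [[y0 [ys [y1 _]]] _] := Hopt.
have HC := @partC x y Hopt.
have HB := @partB y y0 y1 ys.
have HA := @partA ord lam sord psi Hl Hf.
have e1 : expR (-1) <= 1 :> R by rewrite expR_le1; lra.
apply: le_trans HA; apply: le_trans HB.
rewrite mulrAC; apply: ler_wpM2l; last exact: HC.
lra.
Qed.

End Main.

Theorem theorem13 (R : realType) (S V U : finType)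
  (s : S -> R) (c : V -> R) (iu : U -> S) (T : U -> {set V}) (w : U -> R)
  (x : S -> V -> R) (y : U -> R) :
  (forall i, 0 < s i) -> (forall j, 0 < c j) -> (forall k, 0 < w k) ->
  LP_optimal s c iu T w x y ->
  forall (ord : seq V) (lam : {ffun V -> label}),
    SA2_labelling s c iu T w x ord lam ->
  forall (sord : seq 'I_(size (slots s c x lam)))
         (psi : {ffun 'I_(size (slots s c x lam)) -> S}),
    @SA2_filling R S V U s c iu T w x lam sord psi ->
    (1 - expR (-1)) * Ropt s c iu T w / 4 <= reward iu T w (@Xof R S V s c x lam psi).
Proof.
move=> sp cp wp Hopt ord lam Hl sord psi Hf.
have [[_ [_ [_ [cap [xbig xb]]]]] _] := Hopt.
have xg : forall i j, 0 <= x i j by move=> i j; case/andP: (xb i j).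
have xl : forall i j, x i j <= 1 by move=> i j; case/andP: (xb i j).
exact: (@main_ineq R S V U s c iu T w x sp cp wp xg xl cap xbig y ord lam sord psi Hopt Hl Hf).
Qed.
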